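(* Let $g>0$, $\varepsilon>0$, $\lambda_0>0$, $\nu_0>0$ be constants. For each $N\ge 1$ define the constants $\Gamma^N,\Phi^N,\Omega^N,\Lambda^N$ and the maps $A^N,S^N$ as in the context below. Then for every $N\ge 2$ the reduced shallow water moment system of order $N$, $\partial_tU+A^N(U)\partial_xU=S^N(U)$ with $U=(h,hu_m)$, is identical to that of order $2$: that is, $A^N(U)=A^2(U)$ and $S^N(U)=S^2(U)$ for all $h>0$, $u_m\in\mathbb{R}$ (equivalently, $\Gamma^N=\Gamma^2$, $\Phi^N=\Phi^2$, $\Omega^N=\Omega^2$ and $\Lambda^N=\Lambda^2$).
   Context: Let $\phi_j(\zeta)=\frac{1}{j!}\frac{\mathrm{d}^j}{\mathrm{d}\zeta^j}(\zeta-\zeta^2)^j$ (scaled Legendre polynomials on $[0,1]$). For $N\ge1$ let $\boldsymbol{C}_N\in\mathbb{R}^{N\times N}$ have entries $C_{ij}=\int_0^1\phi_i'(\zeta)\phi_j'(\zeta)\,\mathrm{d}\zeta$, and let $\widetilde{\boldsymbol{C}}_N$ have entries $(\widetilde{\boldsymbol{C}}_N)_{ij}=(2i+1)C_{ij}$, $i,j=1,\dots,N$; $\boldsymbol{C}_N$ (hence $\widetilde{\boldsymbol{C}}_N$) is invertible. Define, for $i=1,\dots,N$, $\widetilde B_i^{(N)}=\sum_{j=1}^N(\boldsymbol{C}_N^{-1})_{ij}$, $\widetilde F_i^{(N)}=\sum_{j=1}^N(\widetilde{\boldsymbol{C}}_N^{-1}\boldsymbol{C}_N^{-1})_{ij}$,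 $\widetilde D_i^{(N)}=-\sum_{j=1}^N(\widetilde{\boldsymbol{C}}_N^{-1}\boldsymbol{C}_N^{-1})_{ij}+\Big(\sum_{k,l=1}^N(\boldsymbol{C}_N^{-1})_{kl}\Big)\Big(\sum_{j=1}^N(\boldsymbol{C}_N^{-1})_{ij}\Big)$, and $\Gamma^N=\sum_{j=1}^N\frac{(\widetilde B_j^{(N)})^2}{2j+1}$, $\Phi^N=\sum_{j=1}^N\widetilde F_j^{(N)}$, $\Omega^N=\sum_{j=1}^N\widetilde B_j^{(N)}$, $\Lambda^N=\sum_{j=1}^N\widetilde D_j^{(N)}$. For $U=(h,hu_m)$ with $h>0$, $u_m\in\mathbb{R}$, set \[A^N(U)=\begin{pmatrix}0&1\\ -u_m^2\big(1-\frac{\varepsilon^2h^2}{\lambda_0^2}\Gamma^N\big)+gh\big(1-\frac{\varepsilon^2h^2}{\lambda_0\nu_0}\Phi^N\big) & 2u_m\big(1+\frac{\varepsilon^2h^2}{\lambda_0^2}\Gamma^N\big)\end{pmatrix},\] \[S^N(U)=\begin{pmatrix}0\\ -\frac{\nu_0}{\lambda_0}u_m\big(1-\frac{\varepsilon}{\lambda_0}\Omega^Nh+\frac{\varepsilon^2}{\lambda_0^2}\Lambda^Nh^2\big)\end{pmatrix}.\] The system $\partial_tU+A^N(U)\partial_xU=S^N(U)$ is called the reduced shallow water moment equations (RSWME) of order $N$. *)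

(* Defs.v *)
From HB Require Import structures.
From mathcomp Require Import all_boot all_order all_algebra.
From mathcomp Require Import all_classical all_reals all_analysis.
Set Implicit Arguments. Unset Strict Implicit. Unset Printing Implicit Defensive.
Import Order.TTheory GRing.Theory Num.Theory.
Local Open Scope ring_scope.
Local Open Scope classical_set_scope.

Section RSWME.
Variable R : realType.

Definition phi (j : nat) : {poly R} :=
  (j`!%:R)^-1 *: ((('X - 'X^2) ^+ j)^`(j)).

(* C_N, indices i : 'I_N stand for i.+1 in 1..N *)
Definition Cmat (N : nat) : 'M[R]_N :=
  \matrix_(i < N, j < N)
    Rintegral lebesgue_measure `[0, 1]
      (fun z : R => ((phi i.+1)^`()).[z] * ((phi j.+1)^`()).[z]).

Definition Ctmat (N : nat) : 'M[R]_N :=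
  \matrix_(i < N, j < N) ((2 * i.+1 + 1)%:R * Cmat N i j).

Definition Btil (N : nat) (i : 'I_N) : R := \sum_(j < N) invmx (Cmat N) i j.

Definition Ftil (N : nat) (i : 'I_N) : R :=
  \sum_(j < N) (invmx (Ctmat N) *m invmx (Cmat N)) i j.

Definition Dtil (N : nat) (i : 'I_N) : R :=
  - (\sum_(j < N) (invmx (Ctmat N) *m invmx (Cmat N)) i j)
  + (\sum_(k < N) \sum_(l < N) invmx (Cmat N) k l) *
    (\sum_(j < N) invmx (Cmat N) i j).

Definition GammaN (N : nat) : R :=
  \sum_(j < N) (Btil j ^+ 2) / (2 * j.+1 + 1)%:R.
Definition PhiN (N : nat) : R := \sum_(j < N) Ftil j.
Definition OmegaN (N : nat) : R := \sum_(j < N) Btil j.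
Definition LambdaN (N : nat) : R := \sum_(j < N) Dtil j.

Definition AN (N : nat) (g eps lam0 nu0 h um : R) : 'M[R]_2 :=
  \matrix_(i < 2, j < 2)
    if (i : nat) == 0%N then (if (j : nat) == 0%N then 0 else 1)
    else if (j : nat) == 0%N then
      - um ^+ 2 * (1 - eps ^+ 2 * h ^+ 2 / lam0 ^+ 2 * GammaN N)
      + g * h * (1 - eps ^+ 2 * h ^+ 2 / (lam0 * nu0) * PhiN N)
    else 2 * um * (1 + eps ^+ 2 * h ^+ 2 / lam0 ^+ 2 * GammaN N).

Definition SN (N : nat) (g eps lam0 nu0 h um : R) : 'cV[R]_2 :=
  \col_(i < 2)
    if (i : nat) == 0%N then 0
    else - (nu0 / lam0) * um *
      (1 - eps / lam0 * OmegaN N * h + eps ^+ 2 / lam0 ^+ 2 * LambdaN N * h ^+ 2).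

End RSWME.

(* Main.v *)
Require Import Defs.
From HB Require Import structures.
From mathcomp Require Import all_boot all_order all_algebra.
From mathcomp Require Import all_classical all_reals all_analysis.
From mathcomp Require Import ring lra zify.
Set Implicit Arguments. Unset Strict Implicit. Unset Printing Implicit Defensive.
Import Order.TTheory GRing.Theory Num.Theory.
Import numFieldNormedType.Exports.
Local Open Scope ring_scope.

Section P.
Variable R : realFieldType.

Definition sp (j : nat) : {poly R} := ('X - 'X^2) ^+ j.
Definition ph (j : nat) : {poly R} := (j`!%:R)^-1 *: ((sp j)^`(j)).

Lemma comp_exp (p q : {poly R}) j : (p ^+ j) \Po q = (p \Po q) ^+ j.
Proof. by elim: j => [|j IH]; rewrite ?expr0 ?comp_polyC // !exprS comp_polyM IH. Qed.

Lemma sp_sym j : sp j \Po (1 - 'X) = sp j.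
Proof.
rewrite /sp comp_exp comp_polyB comp_polyX comp_Xn_poly; congr (_ ^+ _); ring.
Qed.

Lemma derivn_comp1 (p : {poly R}) k :
  (p \Po (1 - 'X))^`(k) = (-1) ^+ k *: (p^`(k) \Po (1 - 'X)).
Proof.
elim: k => [|k IH]; first by rewrite !derivn0 expr0 scale1r.
rewrite derivnS IH derivZ deriv_comp derivB derivC derivX sub0r -derivnS.
by rewrite mulrN1 exprS mulN1r scaleNr scalerN.
Qed.

Lemma sp_at1 j k : (sp j)^`(k).[1] = (-1) ^+ k * (sp j)^`(k).[0].
Proof.
have := derivn_comp1 (sp j) k; rewrite sp_sym => H.
have E : (1 - 'X : {poly R}).[0] = 1 by rewrite !hornerE subr0.
rewrite [in RHS]H hornerZ horner_comp E mulrA -exprMn mulN1r opprK.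
by rewrite expr1n mul1r.
Qed.

Lemma sp_factor j : sp j = 'X^j * (1 - 'X) ^+ j.
Proof. by rewrite /sp -exprMn; congr (_ ^+ _); ring. Qed.

Lemma sp_at0 j k : (k <= j)%N -> (sp j)^`(k).[0] = if k == j then j`!%:R else 0.
Proof.
move=> kj; rewrite horner_coef0 coef_derivn addn0 sp_factor coefXnM.
case: ltngtP kj => // [kj _|->]; first by rewrite mul0rn.
move=> _; rewrite subnn -horner_coef0 horner_exp.
have E : (1 - 'X : {poly R}).[0] = 1 by rewrite !hornerE subr0.
by rewrite E expr1n ffactnn.
Qed.


Lemma fact_neq0 j : (j`!%:R : R) != 0.
Proof. by rewrite pnatr_eq0 -lt0n fact_gt0. Qed.

Lemma ph_at0 j : (ph j).[0] = 1.
Proof. by rewrite hornerZ sp_at0 // eqxx mulVf // fact_neq0. Qed.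

Lemma ph_at1 j : (ph j).[1] = (-1) ^+ j.
Proof. by rewrite hornerZ sp_at1 sp_at0 // eqxx mulrCA mulVf ?mulr1 // fact_neq0. Qed.

Definition Qa j : {poly R} := (j.+1`!%:R)^-1 *: (sp j.+1)^`(j).

Lemma Qa_deriv j : (Qa j)^`() = ph j.+1.
Proof. by rewrite /Qa derivZ -derivnS. Qed.

Lemma Qa_at0 j : (Qa j).[0] = 0.
Proof. by rewrite hornerZ sp_at0 // ltn_eqF // mulr0. Qed.

Lemma Qa_at1 j : (Qa j).[1] = 0.
Proof. by rewrite hornerZ sp_at1 sp_at0 // ltn_eqF // !mulr0. Qed.

Lemma omX_eq j : (1 - 'X : {poly R}) ^+ j = ((-1) ^+ j)%:P * ('X - 1%:P) ^+ j.
Proof.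
rewrite -opprB [LHS]exprNn polyC1; congr (_ * _).
by elim: j => [|j IH]; rewrite ?expr0 // !exprS IH polyCM polyCN.
Qed.

Lemma omX_coef_hi j m : (j < m)%N -> ((1 - 'X : {poly R}) ^+ j)`_m = 0.
Proof.
move=> jm; rewrite omX_eq coefCM nth_default ?mulr0 //.
by rewrite size_exp_XsubC.
Qed.

Lemma omX_coef_top j : ((1 - 'X : {poly R}) ^+ j)`_j = (-1) ^+ j.
Proof.
rewrite omX_eq coefCM.
have := lead_coef_exp ('X - 1%:P : {poly R}) j.
by rewrite lead_coefXsubC expr1n lead_coefE size_exp_XsubC /= => ->; rewrite mulr1.
Qed.

Lemma ph_coef j m :
  (ph j)`_m = (j`!%:R)^-1 * ((1 - 'X : {poly R}) ^+ j)`_m *+ (j + m) ^_ j.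
Proof.
rewrite coefZ coef_derivn sp_factor coefXnM ltnNge leq_addr /= addKn.
by rewrite mulrnAr.
Qed.

Lemma dph_coef_hi i m : (i < m)%N -> ((ph i.+1)^`())`_m = 0.
Proof.
by move=> im; rewrite coef_deriv ph_coef omX_coef_hi // mulr0 mul0rn mul0rn.
Qed.

Lemma dph_coef_top i : ((ph i.+1)^`())`_i != 0.
Proof.
rewrite coef_deriv ph_coef omX_coef_top !mulrn_eq0 negb_or /= negb_or.
by rewrite -lt0n ffact_gt0 leq_addr /= mulf_neq0 ?signr_eq0 ?invr_eq0 ?fact_neq0.
Qed.


Lemma dph1 : (ph 1)^`() = (-2)%:P.
Proof.
apply/polyP => m; rewrite coef_deriv ph_coef expr1 coefC.
case: m => [|m] /=.
  rewrite coefB coef1 coefX /= (_ : (1 + 1) ^_ 1 = 2)%N // (_ : 1`! = 1)%N //.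
  by rewrite invr1 mul1r sub0r mulNrn.
by rewrite coefB coef1 coefX /= subr0 mulr0 !mul0rn.
Qed.

Lemma dph2 : (ph 2)^`() = 12%:P * 'X - 6%:P.
Proof.
have E : (1 - 'X : {poly R}) ^+ 2 = 1 - 'X *+ 2 + 'X^2.
  by rewrite expr2 mulrBl !mulrBr mul1r mulr1 -expr2 mulr2n; ring.
apply/polyP => m; rewrite coef_deriv ph_coef E coefB coefC mul_polyC coefZ coefX.
case: m => [|[|m]] /=; rewrite !(coefD, coefB, coef1, coefMNn, coefX, coefXn) /=.
- rewrite (_ : (2 + 1) ^_ 2 = 6)%N // (_ : 2`! = 2)%N // mulr0 sub0r.
  lra.
- rewrite (_ : (2 + 2) ^_ 2 = 12)%N // (_ : 2`! = 2)%N // mulr1.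
  lra.
- by rewrite mul0rn subr0 addr0 mulr0 !mul0rn mulr0 subr0.
Qed.

End P.

Local Open Scope classical_set_scope.
Section A.
Variable R : realType.

Lemma poly_FTC (p P : {poly R}) (a b : R) : a < b -> deriv P = p ->
  Rintegral lebesgue_measure `[a, b] (fun z : R => p.[z]) = P.[b] - P.[a].
Proof.
move=> ab dP.
rewrite /Rintegral (@continuous_FTC2 R (horner p) (horner P) a b ab).
- by rewrite -EFinB.
- by apply/continuous_subspaceT => x0; exact: continuous_horner.
- split.
  + by move=> x _; exact: derivable_horner.
  + exact/cvg_at_right_filter/continuous_horner.
  + exact/cvg_at_left_filter/continuous_horner.
- by move=> x _; rewrite -derivE -/(deriv P) dP.
Qed.

Definition anti (r : {poly R}) : {poly R} :=
  \poly_(k < (size r).+1) (if k is k'.+1 then r`_k' / k'.+1%:R else 0).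

Lemma anti_deriv r : deriv (anti r) = r.
Proof.
apply/polyP => i; rewrite coef_deriv coef_poly ltnS; case: ltnP => h.
- by rewrite -[LHS]mulr_natr divfK // pnatr_eq0.
- by rewrite mul0rn nth_default.
Qed.

Lemma anti_at0 r : (anti r).[0] = 0.
Proof. by rewrite horner_coef0 coef_poly. Qed.

Definition LinN (n : nat) (r : {poly R}) : R := \sum_(k < n) r`_k / k.+1%:R.

Lemma int_LinN (r : {poly R}) n : (size r <= n)%N ->
  Rintegral lebesgue_measure `[0, 1] (fun z : R => r.[z]) = LinN n r.
Proof.
move=> sr; rewrite (poly_FTC ltr01 (anti_deriv r)) anti_at0 subr0.
rewrite (@horner_coef_wide _ n.+1); last first.
  by apply: (leq_trans (size_poly _ _)); rewrite ltnS.
rewrite big_ord_recl coef_poly /= mul0r add0r /LinN; apply: eq_bigr => i _.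
rewrite coef_poly expr1n mulr1 /bump /= add1n ltnS.
by case: ltnP => // h; rewrite nth_default // mul0r.
Qed.

Lemma LinN_sum n (I : finType) (F : I -> {poly R}) :
  LinN n (\sum_i F i) = \sum_i LinN n (F i).
Proof.
rewrite /LinN; under eq_bigr do rewrite coef_sum mulr_suml.
by rewrite exchange_big.
Qed.

Lemma LinN_scale n a (r : {poly R}) : LinN n (a *: r) = a * LinN n r.
Proof.
by rewrite /LinN mulr_sumr; apply: eq_bigr => i _; rewrite coefZ mulrA.
Qed.

Lemma int_sq_eq0 (q : {poly R}) :
  Rintegral lebesgue_measure `[0, 1] (fun z : R => (q * q).[z]) = 0 -> q = 0.
Proof.
move=> H0; set r := q * q.
have rge0 : forall z, 0 <= r.[z] by move=> z; rewrite hornerM -expr2 sqr_ge0.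
set Q := anti r.
have Qeq : forall x, 0 < x < 1 -> Q.[x] = Q.[0].
  move=> x /andP[x0 x1].
  have h1 := poly_FTC x0 (anti_deriv r).
  have h2 := poly_FTC x1 (anti_deriv r).
  have h3 := poly_FTC ltr01 (anti_deriv r).
  have g1 : 0 <= Rintegral lebesgue_measure `[0, x] (fun z : R => r.[z]).
    by apply: Rintegral_ge0 => z _.
  have g2 : 0 <= Rintegral lebesgue_measure `[x, 1] (fun z : R => r.[z]).
    by apply: Rintegral_ge0 => z _.
  rewrite -/Q in h1 h2 h3; rewrite -/r in H0.
  rewrite h1 in g1; rewrite h2 in g2; rewrite h3 in H0.
  move: g1 g2 H0; move: (Q.[x]) (Q.[0]) (Q.[1]) => a b e g1 g2 H0.
  lra.
set c := Q.[0].
have Qc : Q - c%:P = 0.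
  pose rs := [seq (k.+2%:R : R)^-1 | k <- iota 0 (size (Q - c%:P))].
  apply: (@roots_geq_poly_eq0 _ _ rs); last by rewrite size_map size_iota.
  - apply/allP => x /mapP [k _ ->]; rewrite /root hornerD hornerN hornerC.
    rewrite Qeq ?subrr //; apply/andP; split; first by rewrite invr_gt0 ltr0n.
    by rewrite invf_lt1 ?ltr0n // ltr1n.
  - rewrite map_inj_uniq ?iota_uniq // => k l /invr_inj /eqP.
    by rewrite eqr_nat => /eqP [].
have : deriv Q = 0.
  by move/eqP: Qc; rewrite subr_eq0 => /eqP ->; rewrite derivC.
rewrite anti_deriv /r => /eqP; rewrite mulf_eq0 orbb => /eqP //.
Qed.

End A.
Local Close Scope classical_set_scope.

Local Open Scope classical_set_scope.
Section B.
Variable R : realType.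

Definition dp (i : nat) : {poly R} := (ph R i.+1)^`().

Lemma Cmat_E N (i j : 'I_N) : Cmat R N i j =
  Rintegral lebesgue_measure `[0, 1] (fun z : R => (dp i * dp j).[z]).
Proof. by rewrite mxE; congr Rintegral; apply/funext => z; rewrite hornerM. Qed.

Lemma size_dp i : (size (dp i) <= i.+1)%N.
Proof. by apply/leq_sizeP => m hm; apply: dph_coef_hi. Qed.

Lemma Cmat_Lin N (i j : 'I_N) : Cmat R N i j = LinN (N + N) (dp i * dp j).
Proof.
rewrite Cmat_E (@int_LinN _ _ (N + N)) //; apply: (leq_trans (size_polyMleq _ _)).
have := size_dp i; have := size_dp j; have := ltn_ord i; have := ltn_ord j.
move: (size (dp i)) (size (dp j)) => a b; lia.
Qed.

Lemma indep n (F : 'I_n -> R) : \sum_(i < n) F i *: dp i = 0 -> forall i, F i = 0.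
Proof.
elim: n F => [|n IH] F; first by move=> _ [].
rewrite big_ord_recr /= => H.
have Fn : F ord_max = 0.
  have /polyP /(_ n) := H; rewrite coefD coef_sum coefZ coef0 big1; last first.
    by move=> i _; rewrite coefZ dph_coef_hi ?mulr0.
  rewrite add0r => /eqP; rewrite mulf_eq0 (negbTE (dph_coef_top _ n)) orbF.
  by move/eqP.
move: H; rewrite Fn scale0r addr0 => /IH H i.
have [lt|eq] := ltnP i n.
  by rewrite -(H (Ordinal lt)); congr F; apply: val_inj.
suff -> : i = ord_max by [].
by apply: val_inj => /=; have := ltn_ord i; lia.
Qed.

Lemma Cmat_unit N : Cmat R N \in unitmx.
Proof.
rewrite unitmxE unitfE; apply/negP => /det0P [v vn0 vC].
set q := \sum_(i < N) v 0 i *: dp i.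
have sq : (size q <= N)%N.
  apply/leq_sizeP => m hm; rewrite coef_sum big1 // => i _.
  by rewrite coefZ dph_coef_hi ?mulr0 // (leq_trans (ltn_ord i)).
have q0 : q = 0.
  apply: int_sq_eq0; rewrite (@int_LinN _ _ (N + N)); last first.
    apply: (leq_trans (size_polyMleq _ _)).
    move: (size q) sq => a; lia.
  have qq : q * q = \sum_i \sum_j (v 0 i * v 0 j) *: (dp i * dp j).
    rewrite /q mulr_suml; apply: eq_bigr => i _; rewrite mulr_sumr.
    by apply: eq_bigr => j _; rewrite -scalerAl -scalerAr scalerA.
  rewrite qq LinN_sum.
  under eq_bigr do rewrite LinN_sum.
  under eq_bigr do under eq_bigr do rewrite LinN_scale -Cmat_Lin.
  rewrite exchange_big /=.
  transitivity (\sum_j (v *m Cmat R N) 0 j * v 0 j).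
    apply: eq_bigr => j _; rewrite mxE mulr_suml; apply: eq_bigr => i _.
    by rewrite mulrAC.
  by rewrite vC big1 // => j _; rewrite mxE mul0r.
move/negP: vn0; apply; apply/eqP/rowP => i; rewrite mxE.
exact: (@indep N (fun i => v 0 i) q0 i).
Qed.

End B.
Local Close Scope classical_set_scope.

Local Open Scope classical_set_scope.
Section C.
Variable R : realType.

Definition dvec N : 'rV[R]_N := \row_(i < N) ((2 * i.+1 + 1)%:R : R).

Lemma Ctmat_diag N : Ctmat R N = diag_mx (dvec N) *m Cmat R N.
Proof. by apply/matrixP => i j; rewrite mul_diag_mx !mxE. Qed.

Lemma Ctmat_unit N : Ctmat R N \in unitmx.
Proof.
rewrite Ctmat_diag unitmx_mul Cmat_unit andbT unitmxE det_diag unitfE.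
by apply/prodf_neq0 => i _; rewrite mxE pnatr_eq0 addn1.
Qed.

Lemma Ccol0 n (i : 'I_n.+2) : Cmat R n.+2 i ord0 = 2 - 2 * (-1) ^+ i.+1.
Proof.
rewrite Cmat_E.
have -> : dp R (@ord0 n.+1) = (-2)%:P by rewrite /dp dph1.
rewrite (@poly_FTC R _ ((-2) *: ph R i.+1) 0 1 ltr01); last first.
  by rewrite derivZ mulrC mul_polyC.
have h1 := ph_at1 R i.+1; have h0 := ph_at0 R i.+1.
rewrite !hornerZ in h1 h0 *; rewrite h1 h0; ring.
Qed.

Lemma aux_deriv (f Q d : {poly R}) : deriv Q = f -> deriv f = d ->
  deriv (f * (12%:P * 'X - 6%:P) - 12 *: Q) = d * (12%:P * 'X - 6%:P).
Proof.
move=> dQ df; rewrite derivB derivM derivZ dQ df derivB derivC subr0.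
rewrite mul_polyC derivZ derivX -scalerAr mulr1.
by rewrite addrK.
Qed.

Definition o1 n : 'I_n.+2 := @Ordinal n.+2 1 isT.

Lemma Ccol1 n (i : 'I_n.+2) : Cmat R n.+2 i (o1 n) = 6 * (-1) ^+ i.+1 + 6.
Proof.
rewrite Cmat_E.
have -> : dp R (o1 n) = 12%:P * 'X - 6%:P by rewrite /dp dph2.
rewrite (@poly_FTC R _ (ph R i.+1 * (12%:P * 'X - 6%:P) - 12 *: Qa R i) 0 1 ltr01);
  last first.
  exact: aux_deriv (Qa_deriv R i) erefl.
have h1 := ph_at1 R i.+1; have h0 := ph_at0 R i.+1.
have q1 := Qa_at1 R i; have q0 := Qa_at0 R i.
move: h1 h0 q1 q0; move: (ph R i.+1) (Qa R i) => f Q h1 h0 q1 q0.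
rewrite !(hornerD, hornerN, hornerM, hornerZ, hornerC, hornerX) h1 h0 q1 q0; ring.
Qed.

End C.
Local Close Scope classical_set_scope.

Local Open Scope classical_set_scope.
Section D.
Variable R : realType.
Variable n : nat.
Local Notation N := n.+2.

Definition uvec : 'cV[R]_N :=
  \col_(i < N) (if (i : nat) == 0%N then 4^-1 else if (i : nat) == 1%N then 12^-1 else 0).

Definition ones : 'cV[R]_N := const_mx 1.

Lemma sum_u (f : 'I_N -> R) :
  \sum_i uvec i 0 * f i = 4^-1 * f ord0 + 12^-1 * f (o1 n).
Proof.
rewrite 2!big_ord_recl big1 ?addr0; last by move=> i _; rewrite mxE /= mul0r.
rewrite !mxE /=; by have -> : lift ord0 (@ord0 n) = o1 n by apply: val_inj.
Qed.

Lemma Cu : Cmat R N *m uvec = ones.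
Proof.
apply/matrixP => i j; rewrite !mxE (ord1 j).
under eq_bigr do rewrite mulrC.
rewrite sum_u Ccol0 Ccol1.
by move: ((-1) ^+ _) => s; field.
Qed.

Lemma Cmat_sym : (Cmat R N)^T = Cmat R N.
Proof.
apply/matrixP => i j; rewrite mxE !Cmat_E; congr Rintegral.
by apply/funext => z; rewrite mulrC.
Qed.

Lemma uC : uvec^T *m Cmat R N = ones^T.
Proof. by rewrite -{1}Cmat_sym -trmx_mul Cu. Qed.

Lemma rowsum (M : 'M[R]_N) i : \sum_j M i j = (M *m ones) i 0.
Proof. by rewrite mxE; apply: eq_bigr => j _; rewrite mxE mulr1. Qed.

Lemma Btil_eq (i : 'I_N) : Btil R i = uvec i 0.
Proof.
by rewrite /Btil rowsum -Cu mulmxA mulVmx ?Cmat_unit // mul1mx.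
Qed.

Lemma Omega_val : OmegaN R N = 4^-1 + 12^-1.
Proof.
rewrite /OmegaN; under eq_bigr do rewrite Btil_eq -[uvec _ 0]mulr1.
by rewrite sum_u !mulr1.
Qed.

Lemma Gamma_val : GammaN R N = 4^-1 * (4^-1 / 3%:R) + 12^-1 * (12^-1 / 5%:R).
Proof.
rewrite /GammaN; under eq_bigr do rewrite Btil_eq expr2 -mulrA.
by rewrite sum_u !mxE.
Qed.

Lemma Phi_val : PhiN R N = 4^-1 * (4^-1 / 3%:R) + 12^-1 * (12^-1 / 5%:R).
Proof.
set w := invmx (Ctmat R N) *m uvec.
have Fw : forall i, Ftil R i = w i 0.
  by move=> i; rewrite /Ftil rowsum -mulmxA -Cu mulKmx ?Cmat_unit.
have Cw : forall i, (Cmat R N *m w) i 0 = uvec i 0 / (2 * i.+1 + 1)%:R.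
  move=> i.
  have : Ctmat R N *m w = uvec by rewrite /w mulmxA mulmxV ?Ctmat_unit // mul1mx.
  rewrite Ctmat_diag -mulmxA mul_diag_mx => /matrixP /(_ i 0); rewrite !mxE => <-.
  by rewrite mulrC mulKf // pnatr_eq0 addn1.
rewrite /PhiN; under eq_bigr do rewrite Fw.
transitivity ((ones^T *m w) 0 0).
  by rewrite mxE; apply: eq_bigr => i _; rewrite !mxE mul1r.
rewrite -uC -mulmxA mxE.
under eq_bigr do rewrite mxE Cw.
by rewrite sum_u !mxE.
Qed.

Lemma Lambda_val : LambdaN R N = - PhiN R N + OmegaN R N * OmegaN R N.
Proof.
rewrite /LambdaN /Dtil big_split /= sumrN -mulr_sumr.
by [].
Qed.

End D.
Local Close Scope classical_set_scope.

Theorem theorem3 (R : realType) (g eps lam0 nu0 : R)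
  (hg : 0 < g) (heps : 0 < eps) (hlam0 : 0 < lam0) (hnu0 : 0 < nu0)
  (N : nat) (hN : (2 <= N)%N) (h um : R) (hh : 0 < h) :
  AN N g eps lam0 nu0 h um = AN 2 g eps lam0 nu0 h um /\
  SN N g eps lam0 nu0 h um = SN 2 g eps lam0 nu0 h um.
Proof.
case: N hN => [|[|n]] // _.
by rewrite /AN /SN !Lambda_val !Gamma_val !Phi_val !Omega_val.
Qed.
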